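(* Let $G$ be any group (discrete). Then $\ell^1(G)\cdot\ell^\infty(G)^*\subseteq\ell^1(G)$ if and only if $G$ is finite.
   Context: $\ell^1(G)$ is the group algebra with convolution; its second dual is identified with $\ell^\infty(G)^*$ and carries the first Arens product: for $a,b\in\ell^1(G)$, $a'\in\ell^\infty(G)$, $a'',b''\in\ell^\infty(G)^*$, $\langle a'a,b\rangle=\langle a',ab\rangle$, $\langle b''a',a\rangle=\langle b'',a'a\rangle$, $\langle a''\cdot b'',a'\rangle=\langle a'',b''a'\rangle$. The set $\ell^1(G)\cdot\ell^\infty(G)^*$ means $\{a\cdot a'': a\in\ell^1(G),\,a''\in\ell^\infty(G)^*\}$, with $\ell^1(G)$ canonically embedded in its bidual. *)

(* Defs.v *)
From HB Require Import structures.
From mathcomp Require Import all_boot all_order all_algebra.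
From mathcomp Require Import all_classical all_reals.
From mathcomp Require Import topology normedtype sequences numfun esum.
From mathcomp Require Import complex.

Set Implicit Arguments.
Unset Strict Implicit.
Unset Printing Implicit Defensive.
Import Order.TTheory GRing.Theory Num.Theory.

Local Open Scope classical_set_scope.
Local Open Scope ring_scope.

Section L1Bidual.
Variables (R : realType) (G : groupType).
Local Notation C := (R[i]).

Definition cmod (z : C) : R := Num.sqrt (complex.Re z ^+ 2 + complex.Im z ^+ 2).

Definition is_l1 (a : G -> C) : Prop :=
  (\esum_(x in [set: G]) (cmod (a x))%:E < +oo)%E.

Definition is_linf (f : G -> C) : Prop :=
  exists M : R, forall x, cmod (f x) <= M.

Definition rsum (f : G -> R) : R :=
  fine (\esum_(x in [set: G]) (Num.max (f x) 0)%:E)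
  - fine (\esum_(x in [set: G]) (Num.max (- f x) 0)%:E).

Definition csum (f : G -> C) : C :=
  Complex (rsum (fun x => complex.Re (f x))) (rsum (fun x => complex.Im (f x))).

Definition is_linf_dual (Phi : (G -> C) -> C) : Prop :=
  (forall (c : C) (f g : G -> C), is_linf f -> is_linf g ->
      Phi (fun x => c * f x + g x) = c * Phi f + Phi g) /\
  (exists K : R, forall (f : G -> C) (M : R),
      (forall x, cmod (f x) <= M) -> cmod (Phi f) <= K * M).

Definition delta (g : G) : G -> C := fun x => if x == g then 1 else 0.

Definition conv (a b : G -> C) : G -> C :=
  fun x => csum (fun y => a y * b ((y^-1 * x)%g)).

Definition pairing (a' b : G -> C) : C := csum (fun x => a' x * b x).

(* a' a in l^oo(G) = l^1(G)^*, defined by <a' a, b> = <a', a b>;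
   as a function on G its value at z is <a' a, delta z> *)
Definition lact (a' a : G -> C) : G -> C :=
  fun z => pairing a' (conv a (delta z)).

(* b'' a' in l^oo(G), defined by <b'' a', a> = <b'', a' a>;
   its value at g is <b'', a' delta_g> *)
Definition ract (b'' : (G -> C) -> C) (a' : G -> C) : G -> C :=
  fun g => b'' (lact a' (delta g)).

Definition arens (a'' b'' : (G -> C) -> C) : (G -> C) -> C :=
  fun a' => a'' (ract b'' a').

Definition embed (a : G -> C) : (G -> C) -> C := fun a' => pairing a' a.

End L1Bidual.

(* Main.v *)
Require Import Defs.
From HB Require Import structures.
From mathcomp Require Import all_boot all_order all_algebra.
From mathcomp Require Import all_classical all_reals.
From mathcomp Require Import topology normedtype sequences numfun esum.
From mathcomp Require Import complex.
From mathcomp Require Import lra finmap ereal.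

Set Implicit Arguments.
Unset Strict Implicit.
Unset Printing Implicit Defensive.
Import Order.TTheory GRing.Theory Num.Theory.
Import numFieldNormedType.Exports.
Local Open Scope classical_set_scope.
Local Open Scope ring_scope.
Section S.
Variables (R : realType) (G : groupType).
Local Notation C := (R[i]).

Lemma esum_single (h : G -> R) g : (forall x, 0 <= h x) ->
  (forall x, x != g -> h x = 0) ->
  (\esum_(x in [set: G]) (h x)%:E = (h g)%:E)%E.
Proof.
move=> h0 hg; rewrite (esumID [set g]); last by move=> i _; rewrite lee_fin.
rewrite setTI esum_set1 ?lee_fin // esum1 ?adde0 // => x [_ /= xg].
by rewrite hg //; apply/eqP.
Qed.

Lemma maxB (x : R) : Num.max x 0 - Num.max (- x) 0 = x.
Proof.
rewrite !maxEle; case: (lerP x 0) => h1; case: (lerP (-x) 0) => h2; lra.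
Qed.

Lemma rsum_single (h : G -> R) g : (forall x, x != g -> h x = 0) ->
  rsum h = h g.
Proof.
move=> hg; rewrite /rsum.
rewrite (@esum_single (fun x => Num.max (h x) 0) g); last 2 first.
- by move=> x; rewrite le_max lexx orbT.
- by move=> x /hg ->; rewrite maxxx.
rewrite (@esum_single (fun x => Num.max (- h x) 0) g); last 2 first.
- by move=> x; rewrite le_max lexx orbT.
- by move=> x /hg ->; rewrite oppr0 maxxx.
by rewrite /= maxB.
Qed.

Lemma csum_single (f : G -> C) g : (forall x, x != g -> f x = 0) ->
  csum f = f g.
Proof.
move=> fg; rewrite /csum !(@rsum_single _ g); first by case: (f g).
- by move=> x /fg ->.
- by move=> x /fg ->.
Qed.

Lemma conv_delta (g z : G) : conv (delta R g) (delta R z) = delta R (g * z)%g.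
Proof.
apply: funext => x; rewrite /conv (@csum_single _ g).
  rewrite /delta eqxx mul1r; congr (if _ then _ else _).
  apply/eqP/eqP => [<-|->]; first by rewrite mulVKg.
  by rewrite mulKg.
by move=> y yg; rewrite /delta (negbTE yg) mul0r.
Qed.

Lemma pairing_delta (a' : G -> C) z : pairing a' (delta R z) = a' z.
Proof.
rewrite /pairing (@csum_single _ z) /delta ?eqxx ?mulr1 //.
by move=> x /negbTE ->; rewrite mulr0.
Qed.

Lemma lact_delta (a' : G -> C) g : lact a' (delta R g) = fun z => a' (g * z)%g.
Proof. by apply: funext => z; rewrite /lact conv_delta pairing_delta. Qed.

End S.
Section U.
Variables (R : realType) (G : groupType) (U : set_system G).
Hypothesis UU : UltraFilter U.

Lemma ultra_cvg (f : G -> R) (M : R) : (forall x, `|f x| <= M) ->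
  exists p : R, `|p| <= M /\ f x @[x --> U] --> p.
Proof.
move=> fM.
have UM : (f @ U) `[-M, M]%classic.
  apply: (@filterS _ U _ setT); last exact: filterT.
  by move=> x _ /=; rewrite in_itv /= -ler_norml.
have [p [/= pM cp]] := @segment_compact R (-M) M (f @ U) _ UM.
exists p; split; first by move: pM; rewrite in_itv /= -ler_norml.
move=> B Bp /=.
case: (in_ultra_setVsetC (f @^-1` B) UU) => // Uc.
by have [y []] := cp (~` B) B Uc Bp.
Qed.

Definition L (f : G -> R) : R := lim (f x @[x --> U]).

Lemma L_eq f p : f x @[x --> U] --> p -> L f = p.
Proof. by move=> fp; apply: cvg_lim. Qed.

Lemma L_cvg f M : (forall x, `|f x| <= M) -> f x @[x --> U] --> L f.
Proof. by move=> /ultra_cvg [p [_ fp]]; rewrite (L_eq fp). Qed.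

Lemma L_bnd f M : (forall x, `|f x| <= M) -> `|L f| <= M.
Proof. by move=> /ultra_cvg [p [pM fp]]; rewrite (L_eq fp). Qed.

Lemma L_lin (a b : R) f g h M1 M2 M3 : (forall x, `|f x| <= M1) ->
  (forall x, `|g x| <= M2) -> (forall x, `|h x| <= M3) ->
  L (fun x => a * f x - b * g x + h x) = a * L f - b * L g + L h.
Proof.
move=> /L_cvg cf /L_cvg cg /L_cvg ch; apply: L_eq.
apply: cvgD => //; apply: cvgB; exact: cvgMr.
Qed.

Lemma L_cst c : L (fun _ => c) = c.
Proof. by apply: L_eq; apply: cvg_cst. Qed.


Hypothesis UF : @frechet_filter G `<=` U.

Lemma L_delta (z : G) (h : G -> R) : (forall x, x != z -> h x = 0) -> L h = 0.
Proof.
move=> hz; apply: L_eq => B /nbhs_singleton B0.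
apply: (@filterS _ U _ (~` [set z])).
  by move=> x /= xz; rewrite hz //; apply/eqP.
by apply: UF; rewrite /frechet_filter /= setCK; exact: finite_set1.
Qed.

Definition Phi (f : G -> R[i]) : R[i] :=
  Complex (L (fun x => complex.Re (f x))) (L (fun x => complex.Im (f x))).

Lemma Re_le (z : R[i]) : `|complex.Re z| <= cmod z.
Proof.
by rewrite /cmod -sqrtr_sqr ler_wsqrtr // lerDl sqr_ge0.
Qed.

Lemma Im_le (z : R[i]) : `|complex.Im z| <= cmod z.
Proof.
by rewrite /cmod -sqrtr_sqr ler_wsqrtr // lerDr sqr_ge0.
Qed.

Lemma Phi_dual : is_linf_dual Phi.
Proof.
split.
  move=> c f g [M1 f1] [M2 g2].
  have fr x : `|complex.Re (f x)| <= M1 by apply: le_trans (Re_le _) (f1 x).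
  have fi x : `|complex.Im (f x)| <= M1 by apply: le_trans (Im_le _) (f1 x).
  have gr x : `|complex.Re (g x)| <= M2 by apply: le_trans (Re_le _) (g2 x).
  have gi x : `|complex.Im (g x)| <= M2 by apply: le_trans (Im_le _) (g2 x).
  rewrite /Phi.
  have -> : (fun x => complex.Re (c * f x + g x)) =
    (fun x => complex.Re c * complex.Re (f x) - complex.Im c * complex.Im (f x) + complex.Re (g x)).
    by apply: funext => x; case: c => ? ?; case: (f x) => ? ?; case: (g x).
  have -> : (fun x => complex.Im (c * f x + g x)) =
    (fun x => complex.Re c * complex.Im (f x) - (- complex.Im c) * complex.Re (f x) + complex.Im (g x)).
    apply: funext => x; case: c => ? ?; case: (f x) => ? ?; case: (g x) => ? ? /=.
    by rewrite mulNr opprK.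
  rewrite (L_lin _ _ fr fi gr) (L_lin _ _ fi fr gi).
  case: c => c1 c2 /=; congr Complex; lra.
exists 2 => f M fM.
have M0 : 0 <= M by apply: le_trans (fM 1%g); rewrite /cmod sqrtr_ge0.
have hr : `|L (fun x => complex.Re (f x))| <= M.
  by apply: L_bnd => x; apply: le_trans (Re_le _) (fM x).
have hi : `|L (fun x => complex.Im (f x))| <= M.
  by apply: L_bnd => x; apply: le_trans (Im_le _) (fM x).
rewrite /cmod /Phi /=.
move: hr hi; set p := L _; set q := L _ => hr hi.
rewrite -[X in _ <= X]ger0_norm ?mulr_ge0 // -sqrtr_sqr ler_wsqrtr //.
move: hr hi; rewrite !ler_norml => /andP[h1 h2] /andP[h3 h4]; nra.
Qed.

Lemma Phi_delta z : Phi (delta R z) = 0.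
Proof.
rewrite /Phi (@L_delta z) ?(@L_delta z) //.
- by move=> x xz; rewrite /delta (negbTE xz).
- by move=> x xz; rewrite /delta (negbTE xz).
Qed.

Lemma Phi_one : Phi (fun _ => 1) = 1.
Proof. by rewrite /Phi /= !L_cst. Qed.

End U.

Lemma cmod0 (R : realType) : cmod (0 : R[i]) = 0.
Proof. by rewrite /cmod /= expr0n /= addr0 sqrtr0. Qed.

Lemma cmod1 (R : realType) : cmod (1 : R[i]) = 1.
Proof. by rewrite /cmod /= expr0n expr1n /= addr0 sqrtr1. Qed.

Lemma cmod_delta (R : realType) (G : groupType) (z x : G) : cmod (delta R z x) <= 1.
Proof. by rewrite /delta; case: ifP; rewrite ?cmod0 ?cmod1. Qed.

Lemma infinite_part (R : realType) (G : groupType) :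
  infinite_set [set: G] ->
  ~ (forall (a : G -> R[i]) (a'' : (G -> R[i]) -> R[i]),
      is_l1 a -> is_linf_dual a'' ->
      exists c : G -> R[i], is_l1 c /\
        forall a' : G -> R[i], is_linf a' ->
          arens (embed a) a'' a' = embed c a').
Proof.
move=> infG H.
have [U [UU FU]] := ultraFilterLemma (frechet_properfilter infG).
have l1d : is_l1 (delta R (1%g : G)).
  rewrite /is_l1 (@esum_single _ _ _ 1%g).
  - exact: ltry.
  - by move=> x; rewrite /cmod sqrtr_ge0.
  - by move=> x /negbTE x1; rewrite /delta x1 cmod0.
have [c [_ Hc]] := H _ _ l1d (@Phi_dual R G U UU).
have E a' : is_linf a' -> Phi U a' = embed c a'.
  move=> /Hc <-; rewrite /arens /embed pairing_delta /ract lact_delta.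
  by congr (Phi U); apply: funext => z; rewrite mul1g.
have c0 z : c z = 0.
  have /E : is_linf (delta R z) by exists 1; exact: cmod_delta.
  rewrite (@Phi_delta R G U UU FU) /embed /pairing (csum_single (f := fun x => delta R z x * c x) (g := z)) /delta ?eqxx ?mul1r //.
  by move=> x /negbTE ->; rewrite mul0r.
have /E : is_linf (fun _ : G => (1 : R[i])) by exists 1 => x; rewrite cmod1.
rewrite Phi_one /embed /pairing (@csum_single _ _ _ 1%g) ?c0 ?mulr0.
  by move/eqP; rewrite oner_eq0.
by move=> x _; rewrite c0 mulr0.
Qed.

Section Fin.
Variables (R : realType) (G : groupType).
Hypothesis finG : finite_set [set: G].
Local Notation ss := (fset_set [set: G]).

Lemma mem_ss (x : G) : x \in ss.
Proof. by rewrite in_fset_set // in_setT. Qed.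

Lemma uniq_ss : uniq ss.
Proof. exact: fset_uniq. Qed.

Lemma rsum_fin (h : G -> R) : rsum h = \sum_(x <- ss) h x.
Proof.
rewrite /rsum !esum_fset //; last 2 first.
- by move=> i _; rewrite lee_fin le_max lexx orbT.
- by move=> i _; rewrite lee_fin le_max lexx orbT.
rewrite !fsumEFin // /= !fsbig_finite // -sumrB.
by apply: eq_bigr => x _; apply: maxB.
Qed.

Lemma sumC (s : seq G) (f : G -> R[i]) :
  \sum_(x <- s) f x = Complex (\sum_(x <- s) complex.Re (f x)) (\sum_(x <- s) complex.Im (f x)).
Proof.
elim: s => [|y s IH]; first by rewrite !big_nil.
by rewrite !big_cons IH; case: (f y).
Qed.

Lemma csum_fin (f : G -> R[i]) : csum f = \sum_(x <- ss) f x.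
Proof. by rewrite /csum !rsum_fin sumC. Qed.

Lemma fin_bnd (f : G -> R[i]) : is_linf f.
Proof.
exists (\sum_(x <- ss) cmod (f x)) => x.
rewrite (bigD1_seq x) ?mem_ss ?uniq_ss //= lerDl sumr_ge0 // => i _.
by rewrite /cmod sqrtr_ge0.
Qed.

Lemma dual_sum (Phi : (G -> R[i]) -> R[i]) (s : seq G) (F : G -> G -> R[i]) :
  is_linf_dual Phi -> Phi (fun z => \sum_(y <- s) F y z) = \sum_(y <- s) Phi (F y).
Proof.
case=> lin _.
have Phi0 : Phi (fun _ => 0) = 0.
  have := lin (-1) (fun _ => 0) (fun _ => 0) (fin_bnd _) (fin_bnd _).
  have -> : (fun x : G => -1 * (0 : R[i]) + 0) = (fun _ => 0).
    by apply: funext => x; rewrite mulr0 addr0.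
  by rewrite mulN1r addNr.
elim: s => [|y s IH].
  rewrite big_nil -Phi0; congr Phi; apply: funext => z; by rewrite big_nil.
have -> : (fun z => \sum_(y0 <- y :: s) F y0 z) =
    (fun z => 1 * F y z + \sum_(y0 <- s) F y0 z).
  by apply: funext => z; rewrite big_cons mul1r.
rewrite lin; [|exact: fin_bnd|exact: fin_bnd]. by rewrite mul1r big_cons IH.
Qed.

Lemma dual_scale (Phi : (G -> R[i]) -> R[i]) c f :
  is_linf_dual Phi -> Phi (fun z => c * f z) = c * Phi f.
Proof.
move=> D; have [lin _] := D.
have Phi0 : Phi (fun _ => 0) = 0.
  have := lin (-1) (fun _ => 0) (fun _ => 0) (fin_bnd _) (fin_bnd _).
  have -> : (fun x : G => -1 * (0 : R[i]) + 0) = (fun _ => 0).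
    by apply: funext => x; rewrite mulr0 addr0.
  by rewrite mulN1r addNr.
have := lin c f (fun _ => 0) (fin_bnd _) (fin_bnd _).
rewrite Phi0 addr0 => <-; congr Phi; apply: funext => z; by rewrite addr0.
Qed.

Lemma finite_part :
  (forall (a : G -> R[i]) (a'' : (G -> R[i]) -> R[i]),
      is_l1 a -> is_linf_dual a'' ->
      exists c : G -> R[i], is_l1 c /\
        forall a' : G -> R[i], is_linf a' ->
          arens (embed a) a'' a' = embed c a').
Proof.
move=> a a'' _ D.
pose P x y := a'' (fun w => delta R y (x * w)%g).
exists (fun y => \sum_(x <- ss) a x * P x y); split.
  rewrite /is_l1 esum_fset //; last by move=> i _; rewrite lee_fin /cmod sqrtr_ge0.
  by rewrite fsumEFin // ltry.
move=> a' _; rewrite /arens /embed /pairing !csum_fin /ract.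
have E x : a'' (lact a' (delta R x)) = \sum_(y <- ss) a' y * P x y.
  rewrite lact_delta.
  have -> : (fun z => a' (x * z)%g) = (fun w => \sum_(y <- ss) a' y * delta R y (x * w)%g).
    apply: funext => w; rewrite (bigD1_seq (x * w)%g) ?mem_ss ?uniq_ss //=.
    rewrite /delta eqxx mulr1 big1 ?addr0 // => y /negbTE; rewrite eq_sym => ->.
    by rewrite mulr0.
  rewrite dual_sum //; apply: eq_bigr => y _; exact: dual_scale.
under eq_bigr do rewrite E mulr_suml.
rewrite exchange_big /=; apply: eq_bigr => y _.
rewrite mulr_sumr; apply: eq_bigr => x _.
by rewrite -mulrA [P x y * _]mulrC.
Qed.

End Fin.

Theorem corollary2p4 (R : realType) (G : groupType) :
  (forall (a : G -> R[i]) (a'' : (G -> R[i]) -> R[i]),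
      is_l1 a -> is_linf_dual a'' ->
      exists c : G -> R[i], is_l1 c /\
        forall a' : G -> R[i], is_linf a' ->
          arens (embed a) a'' a' = embed c a')
  <-> finite_set [set: G].
Proof.
split => [H | finG].
  by apply: contrapT => infG; exact: (infinite_part infG H).
exact: (@finite_part R G finG).
Qed.
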